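(* Let $T(n)=(3n+1)/2^{v_2(3n+1)}$ be the Syracuse map. For odd $n$ let $L=L(n)=v_2(n+1)-1$, $r=r(n)=v_2(3T^{L}(n)+1)$, and $X(n)=(L+1)\log_2 3-(L+r)$. Consider the distribution of $X$ under natural density on odd starts (the probability law assigning to each value $x$ the natural density, among odd positive integers, of $\{n: X(n)=x\}$). Then: (1) its moment generating function is $$M_X(t)=\mathbb E[e^{tX}]=\frac{e^{t(\log_2 3-2)}}{4\bigl(1-\tfrac12 e^{t(\log_2 3-1)}\bigr)\bigl(1-\tfrac12 e^{-t}\bigr)}$$ for $-\ln 2<t<\ln 2/(\log_2 3-1)$; (2) $\mathbb E[X]=2\log_2 3-4\approx-0.8301$ and $\mathrm{Var}(X)=2\bigl((\log_2 3-1)^2+1\bigr)\approx 2.684$.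
   Context: $v_2$ is the $2$-adic valuation; $T^j$ the $j$-th iterate; $\ln$ is the natural logarithm. *)

(* Defs.v *)
From HB Require Import structures.
From mathcomp Require Import all_boot all_order all_algebra.
From mathcomp Require Import all_classical all_reals all_analysis.
Set Implicit Arguments. Unset Strict Implicit. Unset Printing Implicit Defensive.
Import Order.TTheory GRing.Theory Num.Theory.
Import numFieldNormedType.Exports.
Local Open Scope classical_set_scope.
Local Open Scope ring_scope.

Definition v2 (m : nat) : nat := logn 2 m.

Definition syracuse (n : nat) : nat := (3 * n + 1) %/ 2 ^ v2 (3 * n + 1).

Definition Lval (n : nat) : nat := (v2 n.+1).-1.

Definition rval (n : nat) : nat := v2 (3 * iter (Lval n) syracuse n + 1).

Section Reals.
Variable R : realType.

Definition log2_3 : R := ln 3 / ln 2.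

Definition Xval (n : nat) : R :=
  (Lval n).+1%:R * log2_3 - (Lval n + rval n)%:R.

Definition odd_ratio (P : nat -> bool) (N : nat) : R :=
  (count (fun n => odd n && P n) (iota 1 N))%:R /
  (count odd (iota 1 N))%:R.

Definition odd_density (P : nat -> bool) : R := lim (odd_ratio P @ \oo).

Definition X_law (x : R) : R := odd_density (fun n => Xval n == x).

Definition law_expect (p : R -> R) (f : R -> R) : \bar R :=
  (\esum_(x in [set: R]) (Num.max (p x * f x) 0)%:E -
   \esum_(x in [set: R]) (Num.max (- (p x * f x)) 0)%:E)%E.

Definition law_var (p : R -> R) : \bar R :=
  law_expect p (fun x => (x - fine (law_expect p id)) ^+ 2).

End Reals.

(* Main.v *)
Require Import Defs.
From HB Require Import structures.
From mathcomp Require Import all_boot all_order all_algebra.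
From mathcomp Require Import all_classical all_reals all_analysis.
Import Order.TTheory GRing.Theory Num.Theory.
Import numFieldNormedType.Exports.
From mathcomp Require Import zify ring lra.
Set Implicit Arguments. Unset Strict Implicit. Unset Printing Implicit Defensive.

Lemma v2_pow_odd e w : odd w -> v2 (2 ^ e * w) = e.
Proof.
move=> oo; rewrite /v2 lognM ?expn_gt0 //; last by case: w oo.
by rewrite pfactorK // logn_coprime ?addn0 // coprime2n.
Qed.

Lemma v2_decomp y : 0 < y -> exists2 w, odd w & y = 2 ^ v2 y * w.
Proof.
move=> y0; have [w cop yE] := pfactor_coprime (isT : prime 2) y0.
exists w; first by rewrite -coprime2n.
by rewrite mulnC.
Qed.

Lemma v2_modchar y e : 0 < y ->
  (v2 y == e) = (y %% 2 ^ e.+1 == 2 ^ e).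
Proof.
move=> y0; have [w oo yE] := v2_decomp y0.
have P0 : 0 < 2 ^ e by rewrite expn_gt0.
apply/eqP/eqP => [ve|ym].
  rewrite yE ve; rewrite -(odd_double_half w) oo /= mulnDr muln1.
  rewrite -mul2n mulnA (mulnC _ 2) -expnS addnC mulnC modnMDl modn_small //.
  by rewrite expnS mul2n -addnn -{1}(addn0 (2 ^ e)) ltn_add2l.
have d1 : 2 ^ e %| y.
  by rewrite (divn_eq y (2 ^ e.+1)) ym dvdn_add // ?dvdn_mull // expnS dvdn_mull.
have d2 : ~~ (2 ^ e.+1 %| y).
  by rewrite /dvdn ym -lt0n.
rewrite /v2; move: d1 d2; rewrite !pfactor_dvdn //.
by rewrite -ltnNge ltnS => a b; apply/eqP; rewrite eqn_leq a b.
Qed.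

Lemma v2_double y : 0 < y -> v2 (2 * y) = (v2 y).+1.
Proof. by move=> y0; rewrite /v2 lognM // (pfactorK 1 (isT : prime 2)). Qed.

Lemma syr_step n m s : n.+1 = 2 ^ s.+2 * m -> 0 < m ->
  (syracuse n).+1 = 2 ^ s.+1 * (3 * m).
Proof.
move=> hn m0; set Z := 2 ^ s * m.
have Z0 : 0 < Z by rewrite muln_gt0 expn_gt0.
have hn' : n.+1 = 4 * Z by rewrite hn /Z !expnS; lia.
have e3 : 3 * n + 1 = 2 ^ 1 * ((3 * Z - 1).*2.+1) by rewrite -muln2; lia.
rewrite /syracuse e3 v2_pow_odd /=; last by rewrite odd_double.
rewrite mulKn // /Z !expnS; rewrite -muln2; lia.
Qed.

Lemma syr_iter s n m : n.+1 = 2 ^ s.+1 * m -> 0 < m ->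
  (iter s syracuse n).+1 = 2 * 3 ^ s * m.
Proof.
elim: s n m => [|s IH] n m hn m0; first by rewrite /= hn expn1 muln1.
rewrite iterSr (IH _ (3 * m)) ?(syr_step hn) //; last by rewrite muln_gt0.
by rewrite expnS; lia.
Qed.

Lemma odd_decomp n : odd n -> n.+1 = 2 ^ (Lval n).+1 * (n.+1 %/ 2 ^ v2 n.+1)
   /\ odd (n.+1 %/ 2 ^ v2 n.+1).
Proof.
move=> on; have [w oo E] := v2_decomp (ltn0Sn n).
have v1 : 0 < v2 n.+1.
  by rewrite /v2 -(pfactor_dvdn 1 (isT : prime 2)) // expn1 dvdn2 /= on.
rewrite /Lval prednK //.
have -> : n.+1 %/ 2 ^ v2 n.+1 = w by rewrite {1}E mulKn // expn_gt0.
by split.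
Qed.

Lemma rval_formula n w : n.+1 = 2 ^ (Lval n).+1 * w -> 0 < w ->
  rval n = (v2 (3 ^ (Lval n).+1 * w - 1)).+1.
Proof.
move=> hn o0; rewrite /rval.
have := syr_iter hn o0; set z := iter _ _ _ => hz.
have p0 : 0 < 3 ^ (Lval n) * w by rewrite muln_gt0 expn_gt0.
have -> : 3 * z + 1 = 2 * (3 ^ (Lval n).+1 * w - 1) by rewrite expnS; lia.
rewrite v2_double //; rewrite expnS; lia.
Qed.

Lemma inv_exists P Y : 1 < P -> coprime P Y -> exists u, Y * u = 1 %[mod P].
Proof.
move=> P1 cPY; have [a _] := Bezoutl Y (ltnW P1).
rewrite (eqP cPY) => /dvdnP [s hs].
exists (a * (P - 1)).
have -> : Y * (a * (P - 1)) = (a * Y - s) * P + 1.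
  rewrite mulnA (mulnC Y) mulnBr muln1 mulnBl -hs.
  have X1 : 0 < a * Y.
    rewrite lt0n; apply/negP => /eqP h; move: hs; rewrite h addn0.
    by move=> /esym/eqP; rewrite muln_eq1 => /andP[_ /eqP]; lia.
  have XP : (a * Y).*2 <= a * Y * P by rewrite -muln2 leq_mul2l P1 orbT.
  rewrite -muln2 in XP; lia.
by rewrite modnMDl.
Qed.

Lemma cancel_mod P Y m m' : coprime P Y -> Y * m = Y * m' %[mod P] ->
  m = m' %[mod P].
Proof.
move=> cPY; wlog le : m m' / m' <= m => [W|].
  case: (leqP m' m) => h; first exact: W.
  by move=> /esym H; apply/esym; apply: W => //; apply: ltnW.
move/eqP; rewrite eqn_mod_dvd ?leq_mul2l ?le ?orbT // -mulnBr Gauss_dvdr //.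
by rewrite -eqn_mod_dvd // => /eqP.
Qed.

Lemma odd_gt0 n : odd n -> 0 < n. Proof. by case: n. Qed.

Lemma rval_ge2 n : odd n -> 2 <= rval n.
Proof.
move=> on; have [E oo] := odd_decomp on.
set w := _ %/ _ in E oo.
have o0 : 0 < w by apply: odd_gt0.
rewrite (rval_formula E o0) ltnS.
have Y0 : 0 < 3 ^ (Lval n).+1 * w by rewrite muln_gt0 expn_gt0.
have ev : 2 %| 3 ^ (Lval n).+1 * w - 1.
  by rewrite dvdn2 oddB // oddM oddX /= oo.
rewrite /v2 -(pfactor_dvdn 1 (isT : prime 2)) ?expn1 //.
have : 3 <= 3 ^ (Lval n).+1 * w.
  by rewrite expnS -mulnA leq_pmulr // muln_gt0 expn_gt0.
lia.
Qed.

Lemma residue_char l j : exists b, [/\ b < 2 ^ l.+1 * 2 ^ j.+2, 2 %| b, 0 < b &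
  forall n, (odd n && (Lval n == l) && (rval n == j.+2)) =
            (n.+1 %% (2 ^ l.+1 * 2 ^ j.+2) == b)].
Proof.
set M := 2 ^ j.+2; set Y := 3 ^ l.+1; set c := 2 ^ j.+1 + 1.
have M1 : 1 < M.
  rewrite /M expnS (expnS 2 j); have : 0 < 2 ^ j by rewrite expn_gt0.
  lia.
have cMY : coprime M Y by rewrite /M /Y coprimeXl // coprimeXr.
have [u hu] := inv_exists M1 cMY.
have Meven : odd M = false by rewrite /M oddX.
have uodd : odd u.
  have : odd ((Y * u) %% M) = odd (1 %% M) by rewrite hu.
  by rewrite !odd_mod // oddM /Y oddX /= => ->.
set m0 := (u * c) %% M.
have m0odd : odd m0 by rewrite /m0 odd_mod // oddM uodd /c addn1 /= oddX.
have m0M : m0 < M by rewrite /m0 ltn_mod; lia.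
have cM : c < M.
  rewrite /c /M [2 ^ j.+2]expnS expnS; have : 0 < 2 ^ j by rewrite expn_gt0.
  lia.
have key : forall w, 0 < w ->
   (v2 (Y * w - 1) == j.+1) = (w %% M == m0).
  move=> w o0; have Yo : 0 < Y * w by rewrite muln_gt0 expn_gt0.
  have Yo3 : 3 <= Y * w by rewrite /Y expnS -mulnA leq_pmulr // muln_gt0 expn_gt0.
  rewrite v2_modchar; last by lia.
  rewrite -/M.
  have e1 : (Y * w - 1 == 2 ^ j.+1 %[mod M]) = (Y * w == c %[mod M]).
    by rewrite -(eqn_modDr 1) subnK // /c.
  rewrite -[X in _ == X](@modn_small _ M); last by rewrite /c in cM; lia.
  rewrite e1 /m0; apply/idP/idP => [/eqP h|/eqP h].
    apply/eqP; apply: (cancel_mod cMY); rewrite h mulnA -modnMml hu modnMml mul1n.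
    done.
  apply/eqP; rewrite -modnMmr h modnMmr mulnA -modnMml hu modnMml mul1n.
  by rewrite modn_small.
exists (2 ^ l.+1 * m0); split.
- by rewrite ltn_pmul2l ?expn_gt0.
- by rewrite dvdn_mulr // expnS dvdn_mulr.
- by rewrite muln_gt0 expn_gt0 (odd_gt0 m0odd).
move=> n; apply/idP/idP.
  move=> /andP[/andP[on /eqP hl] /eqP hr].
  have [E oo] := odd_decomp on; set w := _ %/ _ in E oo.
  have o0 : 0 < w by apply: odd_gt0.
  move: hr; rewrite (rval_formula E o0) hl -/Y => -[] /eqP.
  rewrite key // => /eqP ho.
  by rewrite E hl -muln_modr ho.
move=> /eqP h.
have E : n.+1 = 2 ^ l.+1 * (n.+1 %/ (2 ^ l.+1 * M) * M + m0).
  by rewrite {1}(divn_eq n.+1 (2 ^ l.+1 * M)) h mulnDr mulnCA mulnA.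
set w := _ + m0 in E.
have oo : odd w by rewrite /w oddD oddM Meven andbF m0odd.
have o0 : 0 < w by apply: odd_gt0.
have hl : Lval n = l by rewrite /Lval E v2_pow_odd.
have on : odd n.
  by move: E; rewrite expnS -mulnA => /(congr1 odd) /=; rewrite oddM /= => /negbFE.
rewrite on hl eqxx /=.
rewrite -hl in E; rewrite (rval_formula E o0) hl -/Y eqSS key //.
by rewrite /w modnMDl modn_small.
Qed.

Local Open Scope classical_set_scope.

Definition Ccnt (D b N : nat) := count (fun n => n.+1 %% D == b) (iota 1 N).

Lemma window D b x : (0 < D)%N -> (b < D)%N ->
  count (fun y => y %% D == b) (iota x D) = 1%N.
Proof.
move=> D0 bD; elim: x => [|x IH].
  rewrite (eq_in_count (a2 := pred1 b)); last first.
    move=> y; rewrite mem_iota add0n => /andP[_ yD]; by rewrite /= modn_small.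
  by rewrite count_uniq_mem ?iota_uniq // mem_iota bD.
case: D D0 bD IH => // D _ bD IH.
rewrite [iota x.+1 D.+1](_ : _ = iota x.+1 D ++ [:: x.+1 + D]); last first.
  by rewrite -(addn1 D) iotaD.
rewrite count_cat /= addn0 -[RHS]IH /= addnC; congr (_ + _)%N.
by rewrite addSnnS modnDr.
Qed.

Lemma Ccnt_add D b N : (0 < D)%N -> (b < D)%N -> Ccnt D b (N + D) = (Ccnt D b N).+1.
Proof.
move=> D0 bD; rewrite /Ccnt iotaD count_cat -[(count _ _).+1]addn1; congr (_ + _)%N.
have W := window (2 + N) D0 bD.
rewrite iotaDl count_map; move: W; rewrite iotaDl count_map => W.
rewrite -[RHS]W; apply: eq_count => y /=; by rewrite addSn.
Qed.

Lemma Ccnt_small D b r : (0 < D)%N -> (b < D)%N -> (r <= D)%N -> (Ccnt D b r <= 1)%N.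
Proof.
move=> D0 bD rD; have H := Ccnt_add 0 D0 bD; rewrite add0n in H.
apply: leq_trans (eq_leq H); rewrite /Ccnt.
have -> : iota 1 D = iota 1 r ++ iota (1 + r) (D - r) by rewrite -iotaD subnKC.
by rewrite count_cat leq_addr.
Qed.

Lemma Ccnt_bounds D b N : (0 < D)%N -> (b < D)%N ->
  (Ccnt D b N * D <= N + D)%N /\ (N <= Ccnt D b N * D + D)%N.
Proof.
move=> D0 bD.
have E : forall q r, Ccnt D b (q * D + r) = (q + Ccnt D b r)%N.
  move=> q r; elim: q => [|q IH]; first by rewrite mul0n add0n.
  by rewrite mulSn -addnA [D + _]addnC Ccnt_add // IH addSn.
rewrite (divn_eq N D) E; have := @Ccnt_small D b _ D0 bD (ltnW (ltn_pmod N D0)).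
have := ltn_pmod N D0; set r := N %% D; set q := N %/ D.
move: (Ccnt D b r) => c; case: c => [|[|c]] //= rD _; nia.
Qed.

Local Open Scope ring_scope.

Lemma ratio_cvg (R : realType) (c : nat -> nat) (D : nat) : (0 < D)%N ->
  (forall N, c N * D <= N + D)%N -> (forall N, N <= c N * D + D)%N ->
  (fun N => (c N)%:R / N%:R : R) @ \oo --> ((D%:R)^-1 : R).
Proof.
move=> D0 h1 h2; apply/cvgrPdist_le => e e0.
near=> N.
have N1 : e^-1 < N%:R by near: N; apply: nbhs_infty_gtr.
have Np : (0 : R) < N%:R by apply: le_lt_trans N1; rewrite invr_ge0 ltW.
have Dp : (0 : R) < D%:R by rewrite ltr0n.
have ee : e * e^-1 = 1 by rewrite mulfV ?gt_eqF.
have eN : 1 < e * N%:R by nra.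
have -> : (D%:R)^-1 - (c N)%:R / N%:R = (N%:R - (c N)%:R * D%:R) / (D%:R * N%:R) :> R.
  by field; rewrite ?gt_eqF.
rewrite normrM normfV (ger0_norm (x := D%:R * N%:R)) ?mulr_ge0 ?ltW //.
rewrite -/(_ / _) ltr_pdivrMr ?mulr_gt0 //.
have b1 : (c N * D)%:R <= (N + D)%:R :> R by rewrite ler_nat.
have b2 : N%:R <= (c N * D + D)%:R :> R by rewrite ler_nat.
rewrite !natrD natrM in b1 b2.
have : `|N%:R - (c N)%:R * D%:R| <= D%:R :> R by rewrite ler_norml; apply/andP; split; lra.
move=> /le_lt_trans; apply; nra.
Unshelve. all: by end_near. Qed.

Lemma odd_count N : count odd (iota 1 N) = Ccnt 2 0 N.
Proof. by apply: eq_count => n; rewrite modn2 /=; case: (odd n). Qed.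

Lemma Ccnt20_pos N : (0 < N)%N -> (0 < Ccnt 2 0 N)%N.
Proof. by case: N. Qed.

Lemma res_ratio (R : realType) D b : (b < D)%N -> (2 %| D)%N -> (2 %| b)%N ->
  @odd_ratio R (fun n => (n.+1 %% D == b)%N) @ \oo --> (2 / D%:R : R).
Proof.
move=> bD eD eb; have D0 : (0 < D)%N by apply: leq_ltn_trans bD.
have b2 : (0 < 2)%N by [].
have h1 := @ratio_cvg R _ D D0 (fun N => proj1 (Ccnt_bounds N D0 bD))
   (fun N => proj2 (Ccnt_bounds N D0 bD)).
have h2 := @ratio_cvg R _ 2 b2 (fun N => proj1 (Ccnt_bounds N b2 b2))
   (fun N => proj2 (Ccnt_bounds N b2 b2)).
have n2 : (2^-1 : R) != 0 by rewrite invr_eq0 pnatr_eq0.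
have := cvgM h1 (cvgV _ h2); rewrite invrK mulrC => /(_ _ _ n2).
apply: cvg_trans; apply: near_eq_cvg; near=> N.
have Npos : (0 < N)%N by near: N; apply: nbhs_infty_gt.
rewrite /odd_ratio /=.
have -> : count (fun n => odd n && (n.+1 %% D == b)%N) (iota 1 N) = Ccnt D b N.
  apply: eq_count => n /=; case: (boolP (n.+1 %% D == b)%N) => [/eqP h|]; last by rewrite andbF.
  rewrite andbT.
  have : (2 %| n.+1)%N by rewrite (divn_eq n.+1 D) h dvdn_add // dvdn_mull.
  by rewrite dvdn2 /=; case: (odd n).
rewrite odd_count.
have c0 := Ccnt20_pos Npos.
field; rewrite ?pnatr_eq0 -?lt0n //.
by rewrite c0 Npos.
Unshelve. all: by end_near. Qed.

Section Law.
Variable R : realType.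
Local Notation a := (log2_3 R).

Lemma ln2_gt0 : (0 : R) < ln 2.
Proof. by apply: ln_gt0; rewrite ltr1n. Qed.

Lemma a_gt1 : 1 < a.
Proof.
rewrite /log2_3 ltr_pdivlMr ?ln2_gt0 // mul1r.
by rewrite ltr_ln ?posrE ?ltr0n // ltr_nat.
Qed.

Lemma a_irr (p q1 q2 : nat) : p%:R * a + q1%:R = q2%:R -> p = 0%N.
Proof.
move=> h; apply/eqP; rewrite -[_ == _]negbK; apply/negP => p0.
have pa : 0 < p%:R * a by rewrite mulr_gt0 ?ltr0n ?lt0n // (lt_trans ltr01 a_gt1).
have q12 : (q1 < q2)%N by rewrite -(ltr_nat R) -h; lra.
have hd : p%:R * a = (q2 - q1)%:R by rewrite natrB ?(ltnW q12) // -h addrK.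
have hl : ln ((3 : R) ^+ p) = ln ((2 : R) ^+ (q2 - q1)).
  rewrite !lnXn ?ltr0n // -[ln 3 *+ _]mulr_natl -[ln 2 *+ _]mulr_natl -hd /log2_3.
  have := ln2_gt0; move=> /gt_eqF h2; field; by rewrite h2.
have := ln_inj _ _ hl; rewrite !posrE !exprn_gt0 ?ltr0n // => /(_ isT isT).
rewrite -!natrX => /eqP; rewrite eqr_nat => /eqP /(congr1 odd).
rewrite !oddX /= => /esym/eqP; rewrite eqn0Ngt subn_gt0 q12 /=.
by rewrite orbT.
Qed.

Definition hh (l k : nat) : R := (l.+1)%:R * a - (l + k)%:R.

Lemma XvalE n : Xval R n = hh (Lval n) (rval n).
Proof. by []. Qed.

Lemma hh_inj l k l' k' : hh l k = hh l' k' -> l = l' /\ k = k'.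
Proof.
wlog le : l k l' k' / (l <= l')%N => [W|].
  case: (leqP l l') => h; first exact: W.
  by move=> /esym /(W _ _ _ _ (ltnW h)) [-> ->].
rewrite /hh => h.
have hp : (l' - l)%:R * a + (l + k)%:R = (l' + k')%:R :> R.
  move: h; rewrite natrB ?le // !natrD -!natr1; lra.
have p0 := a_irr hp.
have ll : l = l' by lia.
split => //; subst l'; move: hp; rewrite p0 mul0r add0r => /eqP; rewrite eqr_nat.
by rewrite eqn_add2l => /eqP.
Qed.


Definition pm (l j : nat) : R := 2 / (2 ^ l.+1 * 2 ^ j.+2)%:R.

Lemma pmE l j : pm l j = (2^-1) ^+ l.+1 * (2^-1) ^+ j.+1.
Proof.
rewrite /pm natrM !natrX (exprS _ j.+1) !exprVn.
by field; rewrite ?expf_neq0 ?pnatr_eq0.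
Qed.

Lemma pm_gt0 l j : 0 < pm l j.
Proof. by rewrite pmE mulr_gt0 // exprn_gt0 // invr_gt0 ltr0n. Qed.

Lemma Xeq_iff n l k : (Xval R n == hh l k) = (Lval n == l) && (rval n == k).
Proof.
rewrite XvalE; apply/eqP/andP => [/hh_inj [-> ->]|[/eqP-> /eqP->]] //.
Qed.

Lemma ratio_hit l j : @odd_ratio R (fun n => Xval R n == hh l j.+2) @ \oo --> pm l j.
Proof.
have [b [bD eb b0 Hb]] := residue_char l j.
have -> : @odd_ratio R (fun n => Xval R n == hh l j.+2) =
          @odd_ratio R (fun n => (n.+1 %% (2 ^ l.+1 * 2 ^ j.+2) == b)%N).
  rewrite /odd_ratio funeqE => N; congr (_%:R / _); apply: eq_count => n.
  by rewrite -Hb Xeq_iff; case: (odd n).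
apply: res_ratio => //.
by rewrite dvdn_mulr // expnS dvdn_mulr.
Qed.

Lemma ratio_miss x : (forall l j, x != hh l j.+2) ->
  @odd_ratio R (fun n => Xval R n == x) @ \oo --> 0.
Proof.
move=> nx.
have -> : @odd_ratio R (fun n => Xval R n == x) = fun _ => 0.
  rewrite /odd_ratio funeqE => N.
  rewrite (eq_count (a2 := pred0)) ?count_pred0 ?mul0r // => n /=.
  case on: (odd n) => //=; apply/negP => /eqP hx.
  have hr : (rval n - 2).+2 = rval n by have := rval_ge2 on; lia.
  by move: (nx (Lval n) (rval n - 2)%N); rewrite -hx XvalE hr eqxx.
exact: cvg_cst.
Qed.

Lemma Xlaw_hit l j : X_law (hh l j.+2) = pm l j.
Proof. by rewrite /X_law /odd_density; apply: cvg_lim => //; exact: ratio_hit. Qed.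

Lemma Xlaw_miss x : (forall l j, x != hh l j.+2) -> X_law x = 0.
Proof. by move=> nx; rewrite /X_law /odd_density; apply: cvg_lim => //; exact: ratio_miss. Qed.

Lemma ratio_all x : @odd_ratio R (fun n => Xval R n == x) @ \oo --> X_law x.
Proof.
case: (pselect (exists l j, x = hh l j.+2)) => [[l [j ->]]|nx].
  by rewrite Xlaw_hit; exact: ratio_hit.
have nx' : forall l j, x != hh l j.+2.
  by move=> l j; apply/eqP => hx; apply: nx; exists l, j.
by rewrite Xlaw_miss //; exact: ratio_miss.
Qed.

Lemma Xlaw_ge0 (x : R) : 0 <= X_law x.
Proof.
case: (pselect (exists l j, x = hh l j.+2)) => [[l [j ->]]|nx].
  by rewrite Xlaw_hit ltW // pm_gt0.
have nx' : forall l j, x != hh l j.+2.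
  by move=> l j; apply/eqP => hx; apply: nx; exists l, j.
by rewrite Xlaw_miss.
Qed.

End Law.

Section Ser.
Variable R : realType.
Local Notation h := (2^-1 : R).

Definition upoly (c0 c1 c2 : R) (j : nat) : R :=
  h ^+ j.+1 * (c0 + c1 * j%:R + c2 * j%:R ^+ 2).

Lemma Ppoly c0 c1 c2 n : series (upoly c0 c1 c2) n =
  c0 * (1 - h ^+ n) + c1 * (1 - (n%:R + 1) * h ^+ n)
  + c2 * (3 - (n%:R ^+ 2 + 2 * n%:R + 3) * h ^+ n).
Proof.
elim: n => [|n IH].
  by rewrite /series /= big_geq // expr0; ring.
rewrite seriesSr IH /upoly !exprS -natr1; by field.
Qed.

Lemma upoly_ge0 c0 c1 c2 j : 0 <= c0 -> 0 <= c1 -> 0 <= c2 -> 0 <= upoly c0 c1 c2 j.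
Proof.
move=> *; rewrite /upoly mulr_ge0 ?exprn_ge0 ?invr_ge0 ?ler0n //.
by rewrite !addr_ge0 ?mulr_ge0 ?exprn_ge0 ?ler0n.
Qed.

Lemma hpow0 : (fun n => h ^+ n) @ \oo --> 0.
Proof. by apply: cvg_expr; rewrite ger0_norm ?invr_ge0 ?ler0n // invf_lt1 ?ltr1n. Qed.

Lemma bounded_cvg c0 c1 c2 : 0 <= c0 -> 0 <= c1 -> 0 <= c2 ->
  cvgn (series (upoly c0 c1 c2)).
Proof.
move=> h0 h1 h2; apply: nondecreasing_is_cvgn.
  by apply: (@nondecreasing_series _ _ xpredT 0) => n _ _; exact: upoly_ge0.
exists (c0 + c1 + 3 * c2) => _ [n _ <-]; rewrite Ppoly.
have hn : 0 <= h ^+ n by rewrite exprn_ge0 // invr_ge0 ler0n.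
have a1 : 0 <= (n%:R + 1) * h ^+ n by rewrite mulr_ge0 // addr_ge0.
have a2 : 0 <= (n%:R ^+ 2 + 2 * n%:R + 3) * h ^+ n.
  by rewrite mulr_ge0 // !addr_ge0 ?mulr_ge0 ?exprn_ge0.
nra.
Qed.

Lemma npow1 : (fun n => n%:R * h ^+ n) @ \oo --> 0.
Proof.
have H := cvg_series_cvg_0 (bounded_cvg (lexx 0) ler01 (lexx 0)).
have H2 : (fun x => 2 * upoly 0 1 0 x) @ \oo --> (0:R).
  by rewrite -[X in _ --> X](mulr0 (2:R)); apply: cvgMl_tmp.
apply: (cvg_trans _ H2); apply: near_eq_cvg.
by near=> n; rewrite /upoly exprS; field.
Unshelve. all: by end_near. Qed.

Lemma npow2 : (fun n => n%:R ^+ 2 * h ^+ n) @ \oo --> 0.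
Proof.
have H := cvg_series_cvg_0 (bounded_cvg (lexx 0) (lexx 0) ler01).
have H2 : (fun x => 2 * upoly 0 0 1 x) @ \oo --> (0:R).
  by rewrite -[X in _ --> X](mulr0 (2:R)); apply: cvgMl_tmp.
apply: (cvg_trans _ H2); apply: near_eq_cvg.
by near=> n; rewrite /upoly exprS; field.
Unshelve. all: by end_near. Qed.

Lemma Spoly c0 c1 c2 : series (upoly c0 c1 c2) @ \oo --> c0 + c1 + 3 * c2.
Proof.
have -> : series (upoly c0 c1 c2) = fun n =>
  c0 * (1 - h ^+ n) + c1 * (1 - (n%:R * h ^+ n + h ^+ n))
  + c2 * (3 - (n%:R ^+ 2 * h ^+ n + 2 * (n%:R * h ^+ n) + 3 * h ^+ n)).
  by rewrite funeqE => n; rewrite Ppoly; ring.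
have -> : c0 + c1 + 3 * c2 = c0 * (1 - 0) + c1 * (1 - (0 + 0))
   + c2 * (3 - (0 + 2 * 0 + 3 * 0)) by ring.
apply: cvgD; [apply: cvgD|].
- by apply: cvgMl_tmp; apply: cvgB; [exact: cvg_cst|exact: hpow0].
- apply: cvgMl_tmp; apply: cvgB; first exact: cvg_cst.
  by apply: cvgD; [exact: npow1|exact: hpow0].
- apply: cvgMl_tmp; apply: cvgB; first exact: cvg_cst.
  apply: cvgD; [apply: cvgD|].
  + exact: npow2.
  + by apply: cvgMl_tmp; exact: npow1.
  + by apply: cvgMl_tmp; exact: hpow0.
Qed.

Lemma Sgeom (q : R) : 0 <= q < 2 ->
  series (fun j => h ^+ j.+1 * q ^+ j) @ \oo --> (2 - q)^-1.
Proof.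
move=> /andP[q0 q2].
have -> : (fun j => h ^+ j.+1 * q ^+ j) = geometric h (h * q).
  by rewrite funeqE => j /=; rewrite exprMn exprS; ring.
have -> : (2 - q)^-1 = h * (1 - h * q)^-1.
  by field; rewrite subr_eq0 gt_eqF.
apply: cvg_geometric_series; rewrite ger0_norm ?mulr_ge0 ?invr_ge0 ?ler0n //.
rewrite mulrC ltr_pdivrMr ?ltr0n //; lra.
Qed.

End Ser.

Section Es.
Variable R : realType.
Local Notation hh := (@hh R).

Lemma ser_EFin (u : nat -> R) U : series u @ \oo --> U ->
  (\sum_(i <oo) (u i)%:E = U%:E)%E.
Proof.
move=> hu.
have -> : (fun n => \sum_(0 <= i < n) (u i)%:E)%E = EFin \o series u.
  by rewrite funeqE => n; rewrite /= /series /= sumEFin.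
rewrite EFin_lim; last by apply/cvg_ex; exists U.
by rewrite (cvg_lim _ hu).
Qed.

Lemma dbl (g : nat -> nat -> R) (Gl : nat -> R) S :
  (forall l, series (g l) @ \oo --> Gl l) -> series Gl @ \oo --> S ->
  (\sum_(l <oo) \sum_(j <oo) (g l j)%:E = S%:E)%E.
Proof.
move=> hg hG; rewrite -(ser_EFin hG).
congr (limn _); rewrite funeqE => n; apply: eq_bigr => l _.
exact: ser_EFin.
Qed.

Lemma esum_reduce (G : R -> R) : (forall x, 0 <= G x) ->
  (forall x, (forall l j, x != hh l j.+2) -> G x = 0) ->
  (\esum_(x in [set: R]) (G x)%:E =
   \sum_(l <oo) \sum_(j <oo) (G (hh l j.+2))%:E)%E.
Proof.
move=> G0 Gz; set e := fun p : nat * nat => hh p.1 p.2.+2.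
rewrite (esumID (e @` setT)); last by move=> x _; rewrite lee_fin.
rewrite [X in (_ + X)%E]esum1 ?adde0; last first.
  move=> x [_ nx]; rewrite (Gz x) //.
  by move=> l j; apply/eqP => hx; apply: nx; exists (l, j).
rewrite setTI esum_image; last first.
  by move=> [l j] [l' j'] _ _ /hh_inj /= [-> [->]].
have -> : [set: nat * nat] = [set: nat] `*`` (fun _ => [set: nat]).
  by apply/seteqP; split => // [[? ?]].
rewrite -(esum_esum (a := fun l j => (G (hh l j.+2))%:E)); last first.
  by move=> *; rewrite lee_fin.
rewrite nneseries_esumT; last by move=> n; apply: nneseries_ge0 => *; rewrite lee_fin.
apply: eq_esum => l _; rewrite nneseries_esumT // => j; by rewrite lee_fin.
Qed.

End Es.

Section Main.
Variable R : realType.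
Local Notation hh := (@hh R).
Local Notation a := (log2_3 R).
Local Notation h := (2^-1 : R).

Lemma dbl_ext (u v : nat -> nat -> R) : (forall l j, u l j = v l j) ->
  (\sum_(l <oo) \sum_(j <oo) (u l j)%:E = \sum_(l <oo) \sum_(j <oo) (v l j)%:E)%E.
Proof.
move=> e; have -> // : u = v.
by apply/funext => l; apply/funext => j; apply: e.
Qed.

Lemma Xlaw_hh l j : X_law (hh l j.+2) = h ^+ l.+1 * h ^+ j.+1.
Proof. by rewrite Xlaw_hit pmE. Qed.

Lemma esum_part (f : R -> R) :
  (\esum_(x in [set: R]) (Num.max (X_law x * f x) 0)%:E =
   \sum_(l <oo) \sum_(j <oo) (Num.max (h ^+ l.+1 * h ^+ j.+1 * f (hh l j.+2)) 0)%:E)%E.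
Proof.
rewrite (esum_reduce (G := fun x => Num.max (X_law x * f x) 0)).
- by apply: dbl_ext => l j; rewrite Xlaw_hh.
- by move=> x; rewrite le_max lexx orbT.
- by move=> x nx; rewrite Xlaw_miss // mul0r maxxx.
Qed.

Lemma expect_pos (f : R -> R) (S : R) : (forall x, 0 <= f x) ->
  (\sum_(l <oo) \sum_(j <oo) (h ^+ l.+1 * h ^+ j.+1 * f (hh l j.+2))%:E = S%:E)%E ->
  law_expect (@X_law R) f = S%:E.
Proof.
move=> f0 hS; rewrite /law_expect esum_part.
rewrite [X in (_ - X)%E]esum1 ?sube0; last first.
  move=> x _; have : 0 <= X_law x * f x by rewrite mulr_ge0 ?Xlaw_ge0.
  by rewrite -oppr_le0 => /max_idPr ->.
rewrite -hS; apply: dbl_ext => l j; apply/max_idPl.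
by rewrite mulr_ge0 ?mulr_ge0 ?exprn_ge0 ?invr_ge0 ?ler0n.
Qed.

Lemma serZ (u : nat -> R) (U c : R) : series u @ \oo --> U ->
  series (fun j => c * u j) @ \oo --> c * U.
Proof.
move=> hu; have -> : series (fun j => c * u j) = (fun n => c * series u n).
  by apply/funext => n; rewrite /series /= mulr_sumr.
exact: cvgMl_tmp.
Qed.

Lemma SpolyZ (K c0 c1 c2 : R) :
  series (fun j => K * upoly c0 c1 c2 j) @ \oo --> K * (c0 + c1 + 3 * c2).
Proof. exact/serZ/Spoly. Qed.

Lemma a1_gt0 : 0 < a - 1.
Proof. by have := @a_gt1 R; lra. Qed.

Lemma mgf t : - ln 2 < t -> t < ln 2 / (a - 1) ->
  law_expect (@X_law R) (fun x => expR (t * x)) =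
  (expR (t * (a - 2)) /
    (4 * (1 - expR (t * (a - 1)) / 2) * (1 - expR (- t) / 2)))%:E.
Proof.
move=> t1 t2.
set q1 := expR (t * (a - 1)); set q2 := expR (- t); set C := expR (t * (a - 2)).
have l2 : expR (ln 2) = 2 :> R by rewrite lnK // posrE ltr0n.
have q1lt : q1 < 2.
  have t2' : t * (a - 1) < ln 2 by rewrite -ltr_pdivlMr ?a1_gt0.
  by rewrite /q1 -[X in _ < X]l2 ltr_expR.
have q2lt : q2 < 2 by rewrite /q2 -[X in _ < X]l2 ltr_expR; lra.
have q10 : 0 <= q1 by rewrite ltW ?expR_gt0.
have q20 : 0 <= q2 by rewrite ltW ?expR_gt0.
apply: expect_pos => [x|]; first by rewrite ltW ?expR_gt0.
apply: (dbl (Gl := fun l => C * (2 - q2)^-1 * (h ^+ l.+1 * q1 ^+ l))).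
  move=> l.
  have -> : (fun j => h ^+ l.+1 * h ^+ j.+1 * expR (t * hh l j.+2)) =
            (fun j => (C * h ^+ l.+1 * q1 ^+ l) * (h ^+ j.+1 * q2 ^+ j)).
    apply/funext => j.
    have -> : t * hh l j.+2 = t * (a - 2) + l%:R * (t * (a - 1)) + j%:R * (- t).
      by rewrite /hh -[l.+1]addn1 -[j.+2]addn2 !natrD; ring.
    rewrite !expRD !expRM_natl -/q1 -/q2 -/C; ring.
  have -> : C * (2 - q2)^-1 * (h ^+ l.+1 * q1 ^+ l) =
            (C * h ^+ l.+1 * q1 ^+ l) * (2 - q2)^-1 by ring.
  by apply: serZ; apply: Sgeom; rewrite q20.
have -> : C / (4 * (1 - q1 / 2) * (1 - q2 / 2)) = (C * (2 - q2)^-1) * (2 - q1)^-1.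
  by field; rewrite !subr_eq0 ?gt_eqF //; lra.
by apply: serZ; apply: Sgeom; rewrite q10.
Qed.

Lemma dbl_add (u v : nat -> nat -> R) : (forall l j, 0 <= u l j) -> (forall l j, 0 <= v l j) ->
  (\sum_(l <oo) \sum_(j <oo) (u l j + v l j)%:E =
   \sum_(l <oo) \sum_(j <oo) (u l j)%:E + \sum_(l <oo) \sum_(j <oo) (v l j)%:E)%E.
Proof.
move=> u0 v0.
have inner : forall l, (\sum_(j <oo) (u l j + v l j)%:E =
   \sum_(j <oo) (u l j)%:E + \sum_(j <oo) (v l j)%:E)%E.
  move=> l; rewrite -nneseriesD; last 2 first.
  - by move=> *; rewrite lee_fin.
  - by move=> *; rewrite lee_fin.
  by congr (limn _); apply/funext => n; apply: eq_bigr.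
rewrite -nneseriesD; last 2 first.
- by move=> *; apply: nneseries_ge0 => *; rewrite lee_fin.
- by move=> *; apply: nneseries_ge0 => *; rewrite lee_fin.
by congr (limn _); apply/funext => n; apply: eq_bigr => l _; rewrite inner.
Qed.

Lemma ereal_solve (P N Q : \bar R) (c : R) : (0 <= P)%E -> (0 <= N)%E -> (0 <= Q)%E ->
  (P + 4%:E = c%:E + N)%E -> (4%:E = N + Q)%E -> (P - N = (c - 4)%:E)%E.
Proof.
case: P => [p| |]; case: N => [n| |]; case: Q => [q| |] //= _ _ _.
by move=> [e1] _; congr (_%:E); lra.
Qed.

Lemma mean : law_expect (@X_law R) id = (2 * a - 4)%:E.
Proof.
rewrite /law_expect esum_part.
have -> : (\esum_(x in [set: R]) (Num.max (- (X_law x * id x)) 0)%:E =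
           \esum_(x in [set: R]) (Num.max (X_law x * (fun y => - y) x) 0)%:E)%E.
  by apply: eq_esum => x _; rewrite mulrN.
rewrite esum_part.
set w := fun l j => h ^+ l.+1 * h ^+ j.+1.
have w0 : forall l j, 0 <= w l j.
  by move=> l j; rewrite /w mulr_ge0 ?exprn_ge0 ?invr_ge0 ?ler0n.
set A := fun l j => w l j * ((l.+1)%:R * a).
set B := fun l j => w l j * (l + j.+2)%:R.
have A0 : forall l j, 0 <= A l j.
  have a0 : 0 <= a by have := @a_gt1 R; lra.
  move=> l j; apply: mulr_ge0 => //; apply: mulr_ge0 => //; exact: ler0n.
have B0 : forall l j, 0 <= B l j by move=> l j; rewrite /B mulr_ge0 ?ler0n.
have gE : forall l j, w l j * hh l j.+2 = A l j - B l j.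
  by move=> l j; rewrite /A /B /hh; ring.
have EA : (\sum_(l <oo) \sum_(j <oo) (A l j)%:E = (2 * a)%:E)%E.
  apply: (dbl (Gl := fun l => a * upoly 1 1 0 l)) => [l|].
    have -> : A l = (fun j => (h ^+ l.+1 * (l.+1)%:R * a) * upoly 1 0 0 j).
      by apply/funext => j; rewrite /A /w /upoly; ring.
    have -> : a * upoly 1 1 0 l = (h ^+ l.+1 * (l.+1)%:R * a) * (1 + 0 + 3 * 0).
      by rewrite /upoly -[l.+1]addn1 natrD; ring.
    exact: SpolyZ.
  have -> : 2 * a = a * (1 + 1 + 3 * 0) by ring.
  exact: SpolyZ.
have EB : (\sum_(l <oo) \sum_(j <oo) (B l j)%:E = 4%:E)%E.
  apply: (dbl (Gl := fun l => upoly 3 1 0 l)) => [l|].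
    have -> : B l = (fun j => h ^+ l.+1 * upoly (l%:R + 2) 1 0 j).
      by apply/funext => j; rewrite /B /w /upoly -[j.+2]addn2 !natrD; ring.
    have -> : upoly 3 1 0 l = h ^+ l.+1 * ((l%:R + 2) + 1 + 3 * 0).
      by rewrite /upoly; ring.
    exact: SpolyZ.
  have -> : 4 = 3 + 1 + 3 * 0 :> R by ring.
  exact: Spoly.
set gp := fun l j => Num.max (w l j * hh l j.+2) 0.
set gn := fun l j => Num.max (w l j * - hh l j.+2) 0.
have gp0 : forall l j, 0 <= gp l j by move=> l j; rewrite /gp le_max lexx orbT.
have gn0 : forall l j, 0 <= gn l j by move=> l j; rewrite /gn le_max lexx orbT.
have hX : (\sum_(l <oo) \sum_(j <oo)
    (Num.max (h ^+ l.+1 * h ^+ j.+1 * hh l j.+2) 0)%:E)%E =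
    (\sum_(l <oo) \sum_(j <oo) (gp l j)%:E)%E by apply: dbl_ext.
have hY : (\sum_(l <oo) \sum_(j <oo)
    (Num.max (h ^+ l.+1 * h ^+ j.+1 * - hh l j.+2) 0)%:E)%E =
    (\sum_(l <oo) \sum_(j <oo) (gn l j)%:E)%E by apply: dbl_ext.
rewrite hX hY.
have e1 : (\sum_(l <oo) \sum_(j <oo) (gp l j + B l j)%:E =
           \sum_(l <oo) \sum_(j <oo) (A l j + gn l j)%:E)%E.
  apply: dbl_ext => l j; rewrite /gp /gn mulrN gE.
  have := A0 l j; have := B0 l j; move: (A l j) (B l j) => x y x0 y0.
  case: (leP (x - y) 0) => h1; case: (leP (- (x - y)) 0) => h2; lra.
rewrite !dbl_add // EA EB in e1.
have e2 : (4%:E = \sum_(l <oo) \sum_(j <oo) (gn l j)%:E +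
                  \sum_(l <oo) \sum_(j <oo) (B l j - gn l j)%:E)%E.
  rewrite -dbl_add // -?EB; last first.
    move=> l j; rewrite subr_ge0 /gn mulrN gE.
    have := A0 l j; have := B0 l j; move: (A l j) (B l j) => x y x0 y0.
    case: (leP (- (x - y)) 0) => h2; lra.
  by apply: dbl_ext => l j; ring.
apply: (ereal_solve _ _ _ e1 e2).
- by apply: nneseries_ge0 => *; apply: nneseries_ge0 => *; rewrite lee_fin.
- by apply: nneseries_ge0 => *; apply: nneseries_ge0 => *; rewrite lee_fin.
- apply: nneseries_ge0 => l _ _; apply: nneseries_ge0 => j _ _.
  rewrite lee_fin subr_ge0 /gn mulrN gE.
  have := A0 l j; have := B0 l j; move: (A l j) (B l j) => x y x0 y0.
  case: (leP (- (x - y)) 0) => h2; lra.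
Qed.


Lemma var : law_var (@X_law R) = (2 * ((a - 1) ^+ 2 + 1))%:E.
Proof.
rewrite /law_var mean /=.
apply: expect_pos => [x|]; first exact: sqr_ge0.
apply: (dbl (Gl := fun l => upoly ((a - 1) ^+ 2 + 2) (- 2 * (a - 1) ^+ 2) ((a - 1) ^+ 2) l)).
  move=> l; set d := l%:R * (a - 1) + (2 - a).
  have -> : (fun j => h ^+ l.+1 * h ^+ j.+1 * (hh l j.+2 - (2 * a - 4)) ^+ 2) =
            (fun j => h ^+ l.+1 * upoly (d ^+ 2) (- 2 * d) 1 j).
    apply/funext => j; rewrite /upoly /d /hh -[l.+1]addn1 -[j.+2]addn2 !natrD; ring.
  have -> : upoly ((a - 1) ^+ 2 + 2) (- 2 * (a - 1) ^+ 2) ((a - 1) ^+ 2) l =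
            h ^+ l.+1 * (d ^+ 2 + - 2 * d + 3 * 1).
    by rewrite /upoly /d; ring.
  exact: SpolyZ.
have -> : 2 * ((a - 1) ^+ 2 + 1) =
  ((a - 1) ^+ 2 + 2) + (- 2 * (a - 1) ^+ 2) + 3 * ((a - 1) ^+ 2) by ring.
exact: Spoly.
Qed.

Theorem main_all :
  (forall x : R, @odd_ratio R (fun n => @Xval R n == x) @ \oo --> @X_law R x) /\
  (forall t : R, - ln 2 < t -> t < ln 2 / (log2_3 R - 1) ->
     law_expect (@X_law R) (fun x => expR (t * x)) =
     (expR (t * (log2_3 R - 2)) /
       (4 * (1 - expR (t * (log2_3 R - 1)) / 2) * (1 - expR (- t) / 2)))%:E) /\
  law_expect (@X_law R) id = (2 * log2_3 R - 4)%:E /\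
  law_var (@X_law R) = (2 * ((log2_3 R - 1) ^+ 2 + 1))%:E.
Proof.
split; first exact: ratio_all.
split; first exact: mgf.
split; [exact: mean | exact: var].
Qed.

End Main.

Local Open Scope classical_set_scope.
Local Open Scope ring_scope.

Theorem mainTheorem14 (R : realType) :
  (* the law is well defined: each level set {n odd : X(n) = x} has a natural density *)
  (forall x : R, @odd_ratio R (fun n => @Xval R n == x) @ \oo --> @X_law R x) /\
  (* (1) moment generating function *)
  (forall t : R, - ln 2 < t -> t < ln 2 / (log2_3 R - 1) ->
     law_expect (@X_law R) (fun x => expR (t * x)) =
     (expR (t * (log2_3 R - 2)) /
       (4 * (1 - expR (t * (log2_3 R - 1)) / 2) * (1 - expR (- t) / 2)))%:E) /\
  (* (2) mean and variance *)
  law_expect (@X_law R) id = (2 * log2_3 R - 4)%:E /\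
  law_var (@X_law R) = (2 * ((log2_3 R - 1) ^+ 2 + 1))%:E.
Proof. exact: main_all. Qed.
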